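(* Let $q\ge 2$ and let $D$ be a directed graph on $n$ vertices which has an induced acyclic subgraph on $I$ vertices. If $$(n-I)\left(\frac{q}{q-1}\right)^{I} < q,$$ then $D$ is not $q$-solvable.
   Context: A directed graph $D=(V,E)$ has arcs $E \subseteq \{(u,v)\in V^2 : u \neq v\}$ (bidirectional pairs allowed). An induced subgraph is acyclic if it contains no directed cycle. $N^-(v)=\{u:(u,v)\in E\}$. For $q\ge2$ let $[q]=\{0,\dots,q-1\}$. A $D$-function over $[q]$ is a map $f=(f_v)_{v\in V}:[q]^V\to[q]^V$ with each $f_v(x)$ depending only on $(x_u)_{u\in N^-(v)}$. $D$ is $q$-solvable if some $D$-function $f$ over $[q]$ has the property that for every $x\in[q]^V$ there is $v$ with $f_v(x)=x_v$. *)

(* Defs.v *)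
From mathcomp Require Import all_boot all_order all_algebra.
Set Implicit Arguments. Unset Strict Implicit. Unset Printing Implicit Defensive.

(* A digraph on a finite vertex type V is given by an arc relation e : rel V
   (e u v = arc (u,v)); loops are excluded by the hypothesis [irreflexive e]. *)

Definition in_nbr (V : finType) (e : rel V) (v : V) : {set V} := [set u | e u v].

(* A directed cycle inside S: a nonempty closed walk x :: p (x -> ... -> last -> x)
   all of whose vertices lie in S. *)
Definition has_cycle_in (V : finType) (e : rel V) (S : {set V}) : Prop :=
  exists (x : V) (p : seq V), cycle e (x :: p) /\ all (fun y => y \in S) (x :: p).

Definition induced_acyclic (V : finType) (e : rel V) (S : {set V}) : Prop :=
  ~ has_cycle_in e S.

Definition is_D_function (V : finType) (e : rel V) (q : nat)
  (f : V -> {ffun V -> 'I_q} -> 'I_q) : Prop :=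
  forall (v : V) (x y : {ffun V -> 'I_q}),
    (forall u, u \in in_nbr e v -> x u = y u) -> f v x = f v y.

Definition q_solvable (V : finType) (e : rel V) (q : nat) : Prop :=
  exists f : V -> {ffun V -> 'I_q} -> 'I_q,
    is_D_function e f /\ forall x : {ffun V -> 'I_q}, exists v, f v x = x v.

(* Main.v *)
Require Import Defs.
From mathcomp Require Import all_boot all_order all_algebra.
From mathcomp Require Import zify.
Import GRing.Theory Num.Theory.

Section Aux.
Variables (q : nat) (V : finType).
Local Notation X := {ffun V -> 'I_q}.

Definition upd (x : X) (w : V) (k : 'I_q) : X :=
  [ffun u => if u == w then k else x u].

Lemma upd_upd x w a b : upd (upd x w a) w b = upd x w b.
Proof. by apply/ffunP => u; rewrite !ffunE; case: eqP. Qed.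

Lemma upd_id x w : upd x w (x w) = x.
Proof. by apply/ffunP => u; rewrite !ffunE; case: eqP => [->|]. Qed.

Lemma upd_at x w k : upd x w k w = k.
Proof. by rewrite ffunE eqxx. Qed.

Lemma count_split (P : {set X}) (g : X -> 'I_q) w :
  (forall x k, (upd x w k \in P) = (x \in P)) ->
  (forall x k, g (upd x w k) = g x) ->
  #|P| = #|[set x in P | g x == x w]| * q.
Proof.
move=> HP Hg.
pose E := [set x in P | g x == x w].
pose h := fun x : X => (upd x w (g x), x w).
have inj : {in P &, injective h}.
  move=> x y _ _ [E1 E2].
  by rewrite -(upd_id x w) -(upd_id y w) -(upd_upd x w (g x)) -(upd_upd y w (g y)) E1 E2.
rewrite -(card_in_imset inj).
have -> : h @: P = setX E setT.
  apply/setP => [[y k]]; rewrite !inE /=.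
  apply/imsetP/idP.
    move=> [x xP [Ey Ek]]; subst y k; rewrite /= HP xP Hg upd_at eqxx.
    by [].
  rewrite andbT => /andP[yP /eqP gy].
  exists (upd y w k); first by rewrite HP.
  by rewrite /h Hg upd_upd gy upd_id upd_at.
by rewrite cardsX cardsT card_ord.
Qed.

Lemma count_split_neq (P : {set X}) (g : X -> 'I_q) w :
  (forall x k, (upd x w k \in P) = (x \in P)) ->
  (forall x k, g (upd x w k) = g x) ->
  #|[set x in P | g x != x w]| * q = #|P| * q.-1.
Proof.
move=> HP Hg.
have H1 := count_split P g w HP Hg.
have H2 : #|[set x in P | g x == x w]| + #|[set x in P | g x != x w]| = #|P|.
  rewrite -(cardsID [set x | g x == x w] P); congr (_ + _); apply: eq_card => x;
  by rewrite !inE // andbC.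
move: H1 H2.
move: #|[set x in P | g x == x w]| #|[set x in P | g x != x w]| #|P| => a b c.
case: q => [|q'] /= H1 H2; first by lia.
nia.
Qed.

End Aux.
Arguments upd {q V} x w k.
Arguments count_split {q V}.
Arguments count_split_neq {q V}.

Section Sink.
Variables (V : finType) (e : rel V).

Lemma sink_exists (S T : {set V}) :
  induced_acyclic e S -> T \subset S -> T != set0 ->
  exists2 w, w \in T & forall v, v \in T -> ~~ e w v.
Proof.
move=> Hac TS Tn0.
case: (boolP [exists w in T, [forall v in T, ~~ e w v]]).
  move=> /existsP[w /andP[wT /forallP H]]; exists w => // v vT.
  by have := H v; rewrite vT.
move=> Hn; exfalso.
have Hs : forall w, w \in T -> exists2 v, v \in T & e w v.
  move=> w wT.
  case: (boolP [exists v in T, e w v]).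
    by move=> /existsP[v /andP[vT ev]]; exists v.
  move=> Hnv; exfalso; move/negP: Hn; apply; apply/existsP; exists w; rewrite wT /=.
  apply/forallP => v; apply/implyP => vT; apply/negP => ev.
  by move/negP: Hnv; apply; apply/existsP; exists v; rewrite vT.
pose s := fun w => if [pick v in T | e w v] is Some v then v else w.
have sT : forall w, w \in T -> (s w \in T) && e w (s w).
  move=> w wT; rewrite /s; case: pickP => [v /andP[-> ->] //|Hp].
  have [v vT ev] := Hs w wT; by have := Hp v; rewrite vT ev.
have /set0Pn [x0 x0T] := Tn0.
have iT : forall i y, y \in T -> iter i s y \in T.
  by elim=> [//|i IH] y yT; rewrite iterS; case/andP: (sT _ (IH y yT)).
have allT : forall m y, y \in T -> all (fun z => z \in T) (traject s y m).
  elim=> [//|m IH] y yT; rewrite trajectS /= yT IH //.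
  by case/andP: (sT _ yT).
have pathT : forall m y, y \in T -> path e y (traject s (s y) m).
  elim=> [//|m IH] y yT; rewrite trajectS /=.
  case/andP: (sT _ yT) => syT ->; exact: IH.
pose t := traject s x0 #|T|.+1.
have nu : ~~ uniq t.
  apply/negP => /card_uniqP Hu.
  have : #|t| <= #|T|.
    apply: subset_leq_card; apply/subsetP => z zt.
    by move/allP: (allT #|T|.+1 x0 x0T) => /(_ z zt).
  by rewrite Hu size_traject ltnn.
have [i [j [lij ljs Heq]]] := uniqPn x0 nu.
rewrite size_traject in ljs.
rewrite /t !nth_traject // in Heq; last exact: ltn_trans ljs.
pose y := iter i s x0.
have yT : y \in T by apply: iT.
have Hy : iter (j - i) s y = y.
  by rewrite /y -iterD subnK ?Heq // ltnW.
apply: Hac; exists y, (traject s (s y) (j - i).-1); split.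
  rewrite /cycle.
  have Ey : iter (j - i).-1 s (s y) = y by rewrite -iterSr prednK ?subn_gt0.
  rewrite -[X in rcons _ X]Ey -trajectSr prednK ?subn_gt0 //; exact: pathT.
have := allT (j - i) y yT.
rewrite -(prednK (n:=j-i)) ?subn_gt0 // trajectS => H.
apply/allP => z zin; apply: (subsetP TS); exact: (allP H).
Qed.

End Sink.
Arguments sink_exists {V e S T}.

Theorem theorem13 (q : nat) (V : finType) (e : rel V) (S : {set V}) :
  (2 <= q)%N -> irreflexive e -> induced_acyclic e S ->
  ((#|V| - #|S|)%:R * ((q%:R / (q.-1)%:R) ^+ #|S|) < (q%:R : rat))%R ->
  ~ q_solvable e q.
Proof.
move=> q2 irr Hac Hlt [f [HD Hsol]].
pose N := #|{ffun V -> 'I_q}|.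
pose A (T : {set V}) := [set x : {ffun V -> 'I_q} | [forall v in T, f v x != x v]].
have Hg : forall w x k, f w (upd x w k) = f w x.
  move=> w x k; apply: HD => u; rewrite inE ffunE => euw.
  by case: eqP => // uw; subst; rewrite irr in euw.
have HA : forall k (T : {set V}), #|T| = k -> T \subset S -> #|A T| * q ^ #|T| = N * q.-1 ^ #|T|.
  elim=> [|k IH] T cT TS.
    rewrite cT !expn0 !muln1; apply: eq_card => x; rewrite !inE.
    apply/forallP => v; by rewrite (cards0_eq cT) inE.
  have Tn0 : T != set0 by rewrite -card_gt0 cT.
  have [w wT Hw] := sink_exists Hac TS Tn0.
  pose T' := T :\ w.
  have cT' : #|T'| = k by move: cT; rewrite (cardsD1 w T) wT => -[].
  have T'S : T' \subset S by apply: subset_trans TS; apply: subsetDl.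
  have eqA : A T = [set x in A T' | f w x != x w].
    apply/setP => x; rewrite !inE.
    apply/forallP/andP => [H|[/forallP H1 H2] v].
      split; last by have := H w; rewrite wT.
      apply/forallP => v; apply/implyP => /setD1P[_ vT].
      by have := H v; rewrite vT.
    apply/implyP => vT; case: (eqVneq v w) => [->//|vw].
    by have := H1 v; rewrite !inE vw vT.
  have HP : forall x k0, (upd x w k0 \in A T') = (x \in A T').
    move=> x k0; rewrite !inE; apply: eq_forallb_in => v /setD1P[vw vT].
    rewrite ffunE (negbTE vw); congr (_ != _); apply: HD => u; rewrite inE => euv.
    rewrite ffunE; case: eqP => // uw; subst u.
    by have := Hw v vT; rewrite euv.
  have := count_split_neq (A T') (f w) w HP (Hg w).
  rewrite -eqA => H.
  rewrite (cardsD1 w T) wT add1n -/T' !expnS mulnA H -mulnA (mulnC q.-1) mulnA.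
  by rewrite (IH T' cT' T'S) -mulnA (mulnC _ q.-1) mulnA.
have HB : forall v, #|[set x : {ffun V -> 'I_q} | f v x == x v]| * q = N.
  move=> v.
  have := count_split [set: {ffun V -> 'I_q}] (f v) v (fun x k => ltac:(by rewrite !inE)) (Hg v).
  rewrite cardsT => HN; rewrite /N HN; congr (_ * _); apply: eq_card => x; by rewrite !inE.
have HU : forall r : seq V,
    #|[set x : {ffun V -> 'I_q} | has (fun v => f v x == x v) r]| * q <= size r * N.
  elim=> [|v r IH].
    by rewrite mul0n leqn0 muln_eq0 cards_eq0; apply/orP; left; apply/eqP/setP => x; rewrite !inE.
  have -> : [set x : {ffun V -> 'I_q} | has (fun v => f v x == x v) (v :: r)] =
     [set x | f v x == x v] :|: [set x | has (fun v => f v x == x v) r].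
    by apply/setP => x; rewrite !inE.
  rewrite /= mulSn.
  have H1 := cardsU [set x : {ffun V -> 'I_q} | f v x == x v] [set x | has (fun v => f v x == x v) r].
  apply: (@leq_trans ((#|[set x : {ffun V -> 'I_q} | f v x == x v]| + #|[set x : {ffun V -> 'I_q} | has (fun v => f v x == x v) r]|) * q)).
    by rewrite leq_mul2r; apply/orP; right; rewrite H1 leq_subr.
  by rewrite mulnDl HB leq_add2l.
have Hsub : #|A S| * q <= #|~: S| * N.
  rewrite [#|~: S|]cardE; apply: (leq_trans _ (HU _)).
  rewrite leq_mul2r; apply/orP; right; apply: subset_leq_card; apply/subsetP => x.
  rewrite !inE => /forallP HAx.
  have [v Hv] := Hsol x; apply/hasP; exists v; last by rewrite Hv.
  rewrite mem_enum inE; apply/negP => vS.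
  by have := HAx v; rewrite vS Hv eqxx.
have HAS := HA _ S erefl (subxx S).
have Npos : 0 < N by rewrite /N card_ffun card_ord expn_gt0; by rewrite (ltnW q2).
have HcS : #|~: S| = #|V| - #|S| by rewrite [in RHS](cardsCs S) subKn // max_card.
rewrite HcS in Hsub.
have Hnat : (q.-1 ^ #|S| * q <= (#|V| - #|S|) * q ^ #|S|)%N.
  rewrite -(leq_pmul2l Npos) mulnA -HAS mulnAC mulnA (mulnC N).
  exact: leq_mul Hsub (leqnn _).
have qp : 0 < q.-1 by case: q q2 {Hlt HA HB HU Hsub Hnat Hg HD Hsol f A N Npos HAS} => [|[]].
move: Hlt; rewrite expr_div_n -!natrX mulrA ltr_pdivrMr; last first.
  by rewrite ltr0n expn_gt0 qp.
by rewrite -!natrM ltr_nat ltnNge mulnC Hnat.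
Qed.
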